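(* Fix integers $r, s, t \ge 1$. Let $(\Lambda V, d)$ be a minimal Sullivan algebra over $\mathbb{Q}$ with $V = \{V^p\}_{p \ge r}$ (i.e. $V^p = 0$ for $p < r$), and such that $d$ vanishes on all elements of degree $\le s$. Suppose that all $t$-complementary products in $H^+(\Lambda V)$ vanish, i.e. $\alpha \wedge \beta = 0$ in $H^t(\Lambda V)$ for all $\alpha \in H^i(\Lambda V)$, $\beta \in H^{t-i}(\Lambda V)$, $1 \le i \le t-1$. If $t \le r + s$, then the homomorphism $\zeta \colon H^+(\Lambda V) \to V$ is injective in degree $t$.
   Context: A graded vector space is $V = \{V^p\}_{p\ge1}$ of rational vector spaces. $\Lambda V$ is the free graded commutative algebra on $V$; $\Lambda^q V$ is the span of products of word length $q$ of elements of $V$, $\Lambda^{\ge q}V=\bigoplus_{q'\ge q}\Lambda^{q'}V$, $\Lambda^+V = \Lambda^{\ge1}V$. A Sullivan algebra is a commutative cochain algebra $(\Lambda V,d)$ such that there is an increasing filtration $V(0)\subset V(1)\subset\cdots$ with $V=\bigcup V(k)$, $d=0$ on $V(0)$ and $d(V(k))\subset\Lambda V(k-1)$; it is minimal if moreover $\mathrm{im}\, d \subset \Lambda^{\ge2}V$. For a minimal Sullivan algebra, $\zeta \colon H^+(\Lambda V)\to V$ is defined by $\zeta([z]) = \rho(z)$, where $\rho\colon\Lambda^+V\to\Lambda^1V=V$ is the projection onto word length one (well defined since $\mathrm{im}\,d\subset\Lambda^{\ge2}V$). *)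

(* Defs.v *)
(* Sullivan algebras over Q, encoded inside an arbitrary
   Q-algebra A with a grading given by Prop-predicates H p (= A^p). *)
From HB Require Import structures.
From mathcomp Require Import all_boot all_order all_algebra.
From Stdlib Require Import ClassicalEpsilon.
Set Implicit Arguments. Unset Strict Implicit. Unset Printing Implicit Defensive.
Import Order.TTheory GRing.Theory Num.Theory.
Local Open Scope ring_scope.


Definition subspace (A : algType rat) (S : A -> Prop) : Prop :=
  S 0 /\ forall (a : rat) x y, S x -> S y -> S (a *: x + y).

Definition graded_comm_alg (A : algType rat) (H : nat -> A -> Prop) : Prop :=
  [/\ (forall p, subspace (H p)),
      (forall x, exists (n : nat) (c : nat -> A),
          (forall p, H p (c p)) /\ x = \sum_(p < n) c p),
      (forall (n : nat) (c : nat -> A), (forall p, H p (c p)) ->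
          \sum_(p < n) c p = 0 -> forall p, (p < n)%N -> c p = 0),
      H 0%N 1 /\
      (forall p q x y, H p x -> H q y -> H (p + q)%N (x * y)) &
      (forall p q x y, H p x -> H q y -> x * y = (-1) ^+ (p * q) * (y * x))].

Definition alg_hom (A B : algType rat) (phi : A -> B) : Prop :=
  [/\ forall x y, phi (x + y) = phi x + phi y,
      forall (a : rat) x, phi (a *: x) = a *: phi x,
      forall x y, phi (x * y) = phi x * phi y &
      phi 1 = 1].

Section Defs.
Variable A : algType rat.

(* (A, H) is the free graded commutative algebra Lambda V on the graded
   vector space V = {V p}_{p >= 1}, V p <= A^p (universal property). *)
Definition free_gca_on (H V : nat -> A -> Prop) : Prop :=
  [/\ graded_comm_alg H,
      forall p, subspace (V p),
      forall p x, V p x -> H p x,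
      forall x, V 0%N x -> x = 0 &
      forall (B : algType rat) (HB : nat -> B -> Prop), graded_comm_alg HB ->
      forall f : A -> B,
        (forall p x, V p x -> HB p (f x)) ->
        (forall p (a : rat) x y, V p x -> V p y -> f (a *: x + y) = a *: f x + f y) ->
        exists phi : A -> B,
          [/\ alg_hom phi,
              (forall p x, H p x -> HB p (phi x)),
              (forall p x, V p x -> phi x = f x) &
              forall psi : A -> B, alg_hom psi ->
                (forall p x, H p x -> HB p (psi x)) ->
                (forall p x, V p x -> psi x = f x) ->
                forall x, psi x = phi x]].

Definition cochain_diff (H : nat -> A -> Prop) (d : A -> A) : Prop :=
  [/\ forall x y, d (x + y) = d x + d y,
      forall (a : rat) x, d (a *: x) = a *: d x,
      forall p x, H p x -> H p.+1 (d x),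
      forall p x y, H p x -> d (x * y) = d x * y + (-1) ^+ p * (x * d y) &
      forall x, d (d x) = 0].

Inductive gen_alg (W : A -> Prop) : A -> Prop :=
  | gen_W x : W x -> gen_alg W x
  | gen_1 : gen_alg W 1
  | gen_add x y : gen_alg W x -> gen_alg W y -> gen_alg W (x + y)
  | gen_scale (a : rat) x : gen_alg W x -> gen_alg W (a *: x)
  | gen_mul x y : gen_alg W x -> gen_alg W y -> gen_alg W (x * y).

Inductive span (S : A -> Prop) : A -> Prop :=
  | span0 : span S 0
  | spanS x : S x -> span S x
  | spanD x y : span S x -> span S y -> span S (x + y)
  | spanZ (a : rat) x : span S x -> span S (a *: x).

Definition inV (V : nat -> A -> Prop) (v : A) : Prop := exists p, V p v.

Definition lam (V : nat -> A -> Prop) (q : nat) : A -> Prop :=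
  span (fun y => exists s : seq A,
          size s = q /\ (forall v, v \in s -> inV V v) /\ y = \prod_(v <- s) v).

Definition lam_ge (V : nat -> A -> Prop) (q : nat) : A -> Prop :=
  span (fun y => exists s : seq A,
          (q <= size s)%N /\ (forall v, v \in s -> inV V v) /\ y = \prod_(v <- s) v).

Definition sullivan (H V : nat -> A -> Prop) (d : A -> A) : Prop :=
  [/\ free_gca_on H V, cochain_diff H d &
      exists F : nat -> nat -> A -> Prop,
        [/\ forall k p, subspace (F k p),
            (forall k p x, F k p x -> V p x) /\
            (forall k p x, F k p x -> F k.+1 p x),
            forall p x, V p x -> exists k, F k p x,
            forall p x, F 0%N p x -> d x = 0 &
            forall k p x, F k.+1 p x -> gen_alg (fun y => exists q, F k q y) (d x)]].

Definition minimal_sullivan (H V : nat -> A -> Prop) (d : A -> A) : Prop :=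
  sullivan H V d /\ forall x, lam_ge V 2 (d x).

Definition rho (V : nat -> A -> Prop) (x : A) : A :=
  epsilon (inhabits 0) (fun y => lam V 1 y /\
     exists y0 y2, lam V 0 y0 /\ lam_ge V 2 y2 /\ x = y0 + y + y2).

End Defs.

(* Main.v *)
Require Import Defs.
From HB Require Import structures.
From mathcomp Require Import all_boot all_order all_algebra.
From Stdlib Require Import ClassicalEpsilon.
Import Defs.
Set Implicit Arguments. Unset Strict Implicit. Unset Printing Implicit Defensive.
Import Order.TTheory GRing.Theory Num.Theory.
Local Open Scope ring_scope.

Inductive MonD (A : algType rat) (V : nat -> A -> Prop) : nat -> nat -> A -> Prop :=
 | MonD0 : MonD V 0 0 1
 | MonDS n k p v m : V p v -> MonD V n k m -> MonD V n.+1 (p + k) (v * m).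

Definition Mon (A : algType rat) (V : nat -> A -> Prop) (x : A) := exists n k, MonD V n k x.

Lemma MonD_mul (A : algType rat) (V : nat -> A -> Prop) n k x n' k' y :
  MonD V n k x -> MonD V n' k' y -> MonD V (n + n') (k + k') (x * y).
Proof.
move=> Hx Hy; elim: Hx => [|n0 k0 p v m Hv Hm IH]; first by rewrite !add0n mul1r.
rewrite -mulrA addSn -addnA; exact: MonDS.
Qed.

Lemma span_mul (A : algType rat) (S : A -> Prop) :
  S 1 -> (forall x y, S x -> S y -> S (x * y)) ->
  forall x y, span S x -> span S y -> span S (x * y).
Proof.
move=> _ HS x y Hx Hy; elim: Hx => [|x0 Sx|x1 x2 _ IH1 _ IH2|a x0 _ IH].
- rewrite mul0r; exact: span0.
- elim: Hy => [|y0 Sy|y1 y2 _ IH1 _ IH2|a y0 _ IH].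
  + rewrite mulr0; exact: span0.
  + apply: spanS; exact: HS.
  + rewrite mulrDr; exact: spanD.
  + rewrite -scalerAr; exact: spanZ.
- rewrite mulrDl; exact: spanD.
- rewrite -scalerAl; exact: spanZ.
Qed.

Definition Mb (A : algType rat) (V : nat -> A -> Prop) : {pred A} :=
  fun x => if excluded_middle_informative (span (Mon V) x) then true else false.

Lemma MbP (A : algType rat) (V : nat -> A -> Prop) x : reflect (span (Mon V) x) (x \in Mb V).
Proof.
rewrite unfold_in /Mb; case: excluded_middle_informative => h; constructor => //.
Qed.

Lemma Mb_closed (A : algType rat) (V : nat -> A -> Prop) : GRing.subsemialg_closed (Mb V).
Proof.
split.
- apply/MbP/spanS; exists 0%N, 0%N; exact: MonD0.
- split; first exact/MbP/span0.
  move=> x y /MbP hx /MbP hy; exact/MbP/spanD.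
- move=> a x /MbP hx; exact/MbP/spanZ.
- move=> x y /MbP hx /MbP hy; apply/MbP; apply: span_mul => //.
  + exists 0%N, 0%N; exact: MonD0.
  + move=> u w [n [k hu]] [n' [k' hw]]; exists (n + n')%N, (k + k')%N; exact: MonD_mul.
Qed.

Section MBsec.
Variables (A : algType rat) (V : nat -> A -> Prop).
Definition MB := {x : A | x \in Mb V}.
HB.instance Definition _ := [isSub of MB for (@proj1_sig A (fun x => x \in Mb V))].
HB.instance Definition _ := [Equality of MB by <:].
HB.instance Definition _ := [Choice of MB by <:].
HB.instance Definition _ :=
  GRing.SubChoice_isSubAlgebra.Build rat A (Mb V) MB (Mb_closed V).
End MBsec.


Section Aux.
Variables (A : algType rat) (H V : nat -> A -> Prop).

Lemma span_mono (S T : A -> Prop) : (forall x, S x -> T x) -> forall x, span S x -> span T x.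
Proof.
move=> hST x; elim=> [|y /hST|y z _ IH1 _ IH2|a y _ IH].
- exact: span0.
- exact: spanS.
- exact: spanD.
- exact: spanZ.
Qed.

Lemma spanB (S : A -> Prop) x y : span S x -> span S y -> span S (x - y).
Proof. move=> hx hy; apply: spanD => //; rewrite -scaleN1r; exact: spanZ. Qed.

Lemma sub0 p : subspace (H p) -> H p 0.
Proof. by case. Qed.
Lemma subD p x y : subspace (H p) -> H p x -> H p y -> H p (x + y).
Proof. by case=> _ h hx hy; have := h 1 _ _ hx hy; rewrite scale1r. Qed.
Lemma subZ p a x : subspace (H p) -> H p x -> H p (a *: x).
Proof. by case=> h0 h hx; have := h a _ _ hx h0; rewrite addr0. Qed.
Lemma subB p x y : subspace (H p) -> H p x -> H p y -> H p (x - y).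
Proof. by move=> hs hx hy; apply: subD => //; rewrite -scaleN1r; exact: subZ. Qed.

Lemma sum_ext (c : nat -> A) n N : (n <= N)%N -> (forall p, (n <= p)%N -> c p = 0) ->
  \sum_(p < N) c p = \sum_(p < n) c p.
Proof.
move=> hnN hc.
rewrite -!(big_mkord xpredT c) (big_cat_nat (leq0n n) hnN) /=.
rewrite [X in _ + X]big1_seq ?addr0 // => i.
move=> /andP[_]; rewrite mem_index_iota => /andP[h _]; exact: hc.
Qed.

Lemma sum_single (m : A) k N : (k < N)%N ->
  \sum_(p < N) (if (p : nat) == k then m else 0) = m.
Proof.
move=> hk; rewrite (@sum_ext (fun p => if p == k then m else 0) k.+1) //; last first.
  by move=> p hp; rewrite ifN // neq_ltn hp orbT.
rewrite big_ord_recr /= eqxx big1 ?add0r // => i _.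
by rewrite ifN // neq_ltn ltn_ord.
Qed.

Hypothesis hsub : forall p, subspace (H p).
Hypothesis hVH : forall p x, V p x -> H p x.
Hypothesis H01 : H 0%N 1.
Hypothesis Hmul : forall p q x y, H p x -> H q y -> H (p + q)%N (x * y).

Lemma MonD_H n k m : MonD V n k m -> H k m.
Proof. elim=> // n0 k0 p v m0 hv _ IH; apply: Hmul => //; exact: hVH. Qed.

Lemma decomp (Q : nat -> nat -> Prop) x :
 span (fun m => exists n k, Q n k /\ MonD V n k m) x ->
 exists N (c : nat -> A), [/\ forall p, H p (c p),
   forall p, span (fun m => exists n, Q n p /\ MonD V n p m) (c p),
   forall p, (N <= p)%N -> c p = 0 & x = \sum_(p < N) c p].
Proof.
elim=> [|m [n [k [hQ hm]]]|y z _ [N1 [c1 [h1 s1 z1 e1]]] _ [N2 [c2 [h2 s2 z2 e2]]]|a y _ [N1 [c1 [h1 s1 z1 e1]]]].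
- exists 0%N, (fun _ => 0); split=> //; last by rewrite big_ord0.
  + by move=> p; apply: sub0.
  + by move=> p; apply: span0.
- exists k.+1, (fun p => if p == k then m else 0); split.
  + move=> p; case: eqP => [->|_]; [exact: (MonD_H hm)| exact: sub0].
  + move=> p; case: eqP => [->|_]; [apply: spanS; exists n; split=> //| exact: span0].
  + by move=> p hp; rewrite ifN // neq_ltn hp orbT.
  + by rewrite sum_single.
- exists (maxn N1 N2), (fun p => c1 p + c2 p); split.
  + by move=> p; apply: subD.
  + by move=> p; apply: spanD.
  + by move=> p; rewrite geq_max => /andP[a b]; rewrite z1 ?z2 ?addr0.
  + rewrite big_split /= (@sum_ext c1 N1) ?leq_maxl // (@sum_ext c2 N2) ?leq_maxr //.
    by rewrite e1 e2.
- exists N1, (fun p => a *: c1 p); split.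
  + by move=> p; apply: subZ.
  + by move=> p; apply: spanZ.
  + by move=> p hp; rewrite z1 ?scaler0.
  + by rewrite e1 scaler_sumr.
Qed.

End Aux.

Section MBlem.
Variables (A : algType rat) (V : nat -> A -> Prop).
Lemma vD (x y : MB V) : val (x + y) = val x + val y. Proof. exact: rmorphD. Qed.
Lemma vM (x y : MB V) : val (x * y) = val x * val y. Proof. exact: rmorphM. Qed.
Lemma vZ (a : rat) (x : MB V) : val (a *: x) = a *: val x. Proof. exact: linearZ. Qed.
Lemma v0 : val (0 : MB V) = 0. Proof. exact: raddf0. Qed.
Lemma v1 : val (1 : MB V) = 1. Proof. exact: rmorph1. Qed.
Lemma vN1 n : val ((-1) ^+ n : MB V) = (-1) ^+ n. Proof. by rewrite rmorphXn rmorphN rmorph1. Qed.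
Lemma vsum n (c : nat -> MB V) : val (\sum_(p < n) c p) = \sum_(p < n) val (c p).
Proof. exact: rmorph_sum. Qed.
End MBlem.

Lemma MonD_V (A : algType rat) (V : nat -> A -> Prop) p v : V p v -> MonD V 1 (p + 0) v.
Proof. move=> hv; rewrite -[v]mulr1; apply: MonDS => //; exact: MonD0. Qed.

Lemma gen_all (A : algType rat) (H V : nat -> A -> Prop) :
  free_gca_on H V -> forall x, span (Mon V) x.
Proof.
move=> [hgca hVsub hVH hV0 huniv].
have [hsub hdec huniq [H01 Hmul] Hsign] := hgca.
pose HB p (y : MB V) := H p (val y).
have memMb : forall x : A, span (Mon V) x -> x \in Mb V by move=> x /MbP.
have gB : graded_comm_alg HB.
  split.
  - move=> p; split; first by rewrite /HB v0; apply: sub0.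
    by move=> a x y hx hy; rewrite /HB vD vZ; case: (hsub p) => _; apply.
  - move=> x.
    have hx : span (fun m => exists n k, True /\ MonD V n k m) (val x).
      apply: span_mono (elimT (MbP V (val x)) (valP x)).
      by move=> m [n [k hm]]; exists n, k.
    have [N [c [hc1 hc2 _ hce]]] := decomp hsub hVH H01 Hmul hx.
    exists N, (fun p => insubd (0 : MB V) (c p)).
    have vc : forall p, val (insubd (0 : MB V) (c p)) = c p.
      move=> p; rewrite val_insubd memMb //.
      by apply: span_mono (hc2 p) => m [n [_ hm]]; exists n, p.
    split; first by move=> p; rewrite /HB vc.
    by apply: val_inj; rewrite (vsum N (fun p => insubd (0 : MB V) (c p))) hce; apply: eq_bigr => i _; rewrite vc.
  - move=> n c hc hs p hp; apply: val_inj; rewrite v0.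
    apply: (huniq n (fun p => val (c p))) => //.
    by rewrite -vsum hs v0.
  - split; first by rewrite /HB v1.
    by move=> p q x y hx hy; rewrite /HB vM; apply: Hmul.
  - move=> p q x y hx hy; apply: val_inj.
    by rewrite !vM vN1; apply: Hsign.
pose f (x : A) := insubd (0 : MB V) x.
have vf : forall p x, V p x -> val (f x) = x.
  move=> p x hx; rewrite val_insubd memMb //; apply: spanS.
  by exists 1%N, (p + 0)%N; apply: MonD_V.
have flin : forall p a x y, V p x -> V p y -> f (a *: x + y) = a *: f x + f y.
  move=> p a x y hx hy; apply: val_inj; rewrite vD vZ (vf p x hx) (vf p y hy).
  by apply: (vf p); case: (hVsub p) => _; apply.
have fH : forall p x, V p x -> HB p (f x).
  by move=> p x hx; rewrite /HB (vf p x hx); apply: hVH.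
have [phi [phom phiH phiV _]] := huniv (MB V) HB gB f fH flin.
have [phi' [_ _ _ uniq']] := huniv A H hgca id (fun p x hx => hVH p x hx)
  (fun _ _ _ _ _ _ => erefl).
have idhom : alg_hom (@id A) by [].
have vhom : alg_hom (fun x => val (phi x)).
  case: phom => pD pZ pM p1; split.
  - by move=> x y; rewrite pD vD.
  - by move=> a x; rewrite pZ vZ.
  - by move=> x y; rewrite pM vM.
  - by rewrite p1 v1.
move=> x.
have e1 := uniq' id idhom (fun p x hx => hx) (fun _ _ _ => erefl) x.
have e2 := uniq' _ vhom (fun p x hx => phiH p x hx)
  (fun p x hx => etrans (congr1 val (phiV p x hx)) (vf p x hx)) x.
apply/MbP; rewrite -/(id x) e1 -e2; exact: valP.
Qed.

Section Main.
Variables (A : algType rat) (V : nat -> A -> Prop).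

Lemma monseq n k m : MonD V n k m -> exists s : seq A,
  size s = n /\ (forall v, v \in s -> inV V v) /\ m = \prod_(v <- s) v.
Proof.
elim=> [|n0 k0 p v m0 hv _ [s [hs [hin ->]]]].
- by exists [::]; rewrite big_nil.
- exists (v :: s); split; first by rewrite /= hs.
  split; last by rewrite big_cons.
  move=> w; rewrite in_cons => /orP[/eqP ->|/hin //]; by exists p.
Qed.

Lemma seqmon (s : seq A) : (forall v, v \in s -> inV V v) ->
  exists k, MonD V (size s) k (\prod_(v <- s) v).
Proof.
elim: s => [|v s IH] hin; first by exists 0%N; rewrite big_nil; exact: MonD0.
have [p hp] : inV V v by apply: hin; rewrite mem_head.
have [k hk] : exists k, MonD V (size s) k (\prod_(v <- s) v).
  by apply: IH => w hw; apply: hin; rewrite in_cons hw orbT.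
exists (p + k)%N; rewrite big_cons; exact: MonDS.
Qed.

Lemma split3 x : span (Mon V) x -> exists y0 y1 y2,
  [/\ lam V 0 y0, lam V 1 y1, lam_ge V 2 y2 & x = y0 + y1 + y2].
Proof.
elim=> [|m [n [k hm]]|y z _ [a0 [a1 [a2 [h0 h1 h2 ->]]]] _ [b0 [b1 [b2 [g0 g1 g2 ->]]]]|a y _ [a0 [a1 [a2 [h0 h1 h2 ->]]]]].
- by exists 0, 0, 0; split; try exact: span0; rewrite !addr0.
- have [s [hs [hin ->]]] := monseq hm.
  case: n hs hm => [|[|n]] hs hm.
  + exists (\prod_(v <- s) v), 0, 0; split; try exact: span0; last by rewrite !addr0.
    by apply: spanS; exists s.
  + exists 0, (\prod_(v <- s) v), 0; split; try exact: span0; last by rewrite addr0 add0r.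
    by apply: spanS; exists s.
  + exists 0, 0, (\prod_(v <- s) v); split; try exact: span0; last by rewrite !add0r.
    by apply: spanS; exists s; rewrite hs.
- exists (a0 + b0), (a1 + b1), (a2 + b2); split; try exact: spanD.
  by rewrite [LHS]addrACA (addrACA a0).
- exists (a *: a0), (a *: a1), (a *: a2); split; try exact: spanZ.
  by rewrite !scalerDr.
Qed.

End Main.

From mathcomp Require Import zify.

Lemma zl (M : zmodType) (a u c b e : M) : (a + u + c) - (b + u + e) = (a - b) + (c - e).
Proof.
rewrite -(addrA a u c) (addrC u c) (addrA a c u) -(addrA b u e) (addrC u e) (addrA b e u).
by rewrite opprD addrA addrAC addrK opprD addrACA.
Qed.

Lemma MonD_k0 (A : algType rat) (V : nat -> A -> Prop) k m : MonD V 0 k m -> k = 0%N.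
Proof. by move=> h; inversion h. Qed.

Lemma Mon_lower (A : algType rat) (V : nat -> A -> Prop) r :
  (forall p x, (p < r)%N -> V p x -> x = 0) ->
  forall n k m, MonD V n k m -> (0 < n)%N -> m = 0 \/ (r <= k)%N.
Proof.
move=> hVr n k m; elim=> // n0 k0 p v m0 hv _ _ _.
case: (ltnP p r) => hp; first by left; rewrite (hVr p v hp hv) mul0r.
by right; apply: leq_trans hp (leq_addr _ _).
Qed.

Theorem mainTheorem7 (r s t : nat) (A : algType rat)
    (H V : nat -> A -> Prop) (d : A -> A) :
  (1 <= r)%N -> (1 <= s)%N -> (1 <= t)%N ->
  minimal_sullivan H V d ->
  (* V^p = 0 for p < r *)
  (forall p x, (p < r)%N -> V p x -> x = 0) ->
  (* d vanishes on all elements of degree <= s *)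
  (forall p x, (p <= s)%N -> H p x -> d x = 0) ->
  (* all t-complementary products in H^+(Lambda V) vanish *)
  (forall i a b, (1 <= i <= t - 1)%N ->
      H i a -> d a = 0 -> H (t - i)%N b -> d b = 0 ->
      exists w, H (t - 1)%N w /\ d w = a * b) ->
  (t <= r + s)%N ->
  (* zeta : H^t(Lambda V) -> V^t, [z] |-> rho z, is injective *)
  forall z1 z2, H t z1 -> d z1 = 0 -> H t z2 -> d z2 = 0 ->
    rho V z1 = rho V z2 ->
    exists w, H (t - 1)%N w /\ d w = z1 - z2.
Proof.
move=> hr hs ht [[hfree hcd _] _] hVr hds hprod htrs z1 z2 Hz1 dz1 Hz2 dz2 hrho.
have gen := gen_all hfree.
have [hgca hVsub hVH hV0 _] := hfree.
have [hsub _ huniq [H01 Hmul] _] := hgca.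
have [dD dZ _ _ _] := hcd.
have d0 : d 0 = 0 by have := dZ 0 0; rewrite !scale0r.
pose E x := exists w, H (t - 1)%N w /\ d w = x.
have E0 : E 0 by exists 0; split=> //; apply: sub0.
have EZ : forall a x y, E x -> E y -> E (a *: x + y).
  move=> a x y [wx [hx dx]] [wy [hy dy]]; exists (a *: wx + wy); split.
  - by case: (hsub (t - 1)%N) => _; apply.
  - by rewrite dD dZ dx dy.
have rspec : forall x, lam V 1 (rho V x) /\
    exists y0 y2, lam V 0 y0 /\ lam_ge V 2 y2 /\ x = y0 + rho V x + y2.
  move=> x; apply: (epsilon_spec (inhabits (0:A)) (fun y => lam V 1 y /\ exists y0 y2, lam V 0 y0 /\ lam_ge V 2 y2 /\ x = y0 + y + y2)).
  have [y0 [y1 [y2 [h0 h1 h2 ->]]]] := split3 (gen x).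
  by exists y1; split=> //; exists y0, y2.
have [_ [a0 [a2 [ha0 [ha2 e1]]]]] := rspec z1.
have [_ [b0 [b2 [hb0 [hb2 e2]]]]] := rspec z2.
pose Q (n k : nat) := n != 1%N.
have zN : span (fun m => exists n k, Q n k /\ MonD V n k m) (z1 - z2).
  have -> : z1 - z2 = (a0 - b0) + (a2 - b2).
    by rewrite e1 e2 hrho zl.
  have c0 : forall y, lam V 0 y -> span (fun m => exists n k, Q n k /\ MonD V n k m) y.
    apply: span_mono => m [sq [hsz [hin ->]]].
    have [k hk] := seqmon hin; exists (size sq), k; split=> //; by rewrite hsz.
  have c2 : forall y, lam_ge V 2 y -> span (fun m => exists n k, Q n k /\ MonD V n k m) y.
    apply: span_mono => m [sq [hsz [hin ->]]].
    have [k hk] := seqmon hin; exists (size sq), k; split=> //.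
    by rewrite /Q; apply/eqP => h; rewrite h in hsz.
  by apply: spanD; apply: spanB; [apply: c0|apply: c0|apply: c2|apply: c2].
have [N [c [hc1 hc2 hc3 hce]]] := decomp hsub hVH H01 Hmul zN.
have Hz : H t (z1 - z2) by apply: subB.
pose N' := maxn N t.+1.
pose e p := c p - (if p == t then z1 - z2 else 0).
have he : forall p, H p (e p).
  move=> p; apply: subB => //; case: eqP => [->|_] //; exact: sub0.
have hsume : \sum_(p < N') e p = 0.
  rewrite /e sumrB (@sum_ext _ c N) ?leq_maxl // -hce.
  by rewrite (sum_single (z1 - z2)) ?subrr // leq_max ltnSn orbT.
have ect := huniq N' e he hsume t (leq_trans (ltnSn t) (leq_maxr _ _)).
have -> : z1 - z2 = c t by apply/eqP; rewrite eq_sym -subr_eq0; move: ect; rewrite /e eqxx => ->.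
have hmon : forall n k m, MonD V n k m -> n != 1%N -> k = t -> E m.
  move=> n k m hm; case: hm => [|n' k' p v m' hv hm'] hn1 hkt.
  - by move: ht; rewrite -hkt.
  have hn' : (0 < n')%N by case: n' hm' hn1.
  case: (ltnP p r) => hpr; first by rewrite (hVr p v hpr hv) mul0r.
  case: (Mon_lower hVr hm' hn') => [->|hk']; first by rewrite mulr0.
  have dv : d v = 0 by apply: (hds p) => //; [lia | exact: hVH].
  have dm : d m' = 0 by apply: (hds k') => //; [lia | exact: (MonD_H hVH H01 Hmul hm')].
  have hi : (1 <= p <= t - 1)%N by apply/andP; split; lia.
  have htp : (t - p)%N = k' by lia.
  apply: (hprod p v m' hi (hVH p v hv) dv _ dm).
  by rewrite htp; exact: (MonD_H hVH H01 Hmul hm').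
have := hc2 t; elim=> [|m [n [hn hm]]|x y _ Ex _ Ey|a x _ Ex].
- exact: E0.
- exact: (hmon n t m hm hn).
- by have := EZ 1 x y Ex Ey; rewrite scale1r.
- by have := EZ a x 0 Ex E0; rewrite addr0.
Qed.
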